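(* The map $\omega:(\Xi,d')\to(\Xi,d')$, $\omega([(L,v)])=[(\omega(L),v)]$, is continuous.
   Context: Combinatorial tiling: 2-dimensional CW-complex homeomorphic to the open unit disk. Decorated subdivision: a decorated pentagon has boundary vertices $v_1,\dots,v_5$ in cyclic order (indices mod 5), corner $v_i$ labelled $i$; $\omega$ adds $m_i$ inside edge $v_iv_{i+1}$, interior vertices $c_1,\dots,c_5$, edges $c_ic_{i+1}$, $c_im_i$, and replaces the face by the central pentagon $c_1\cdots c_5$ (label $i+1$ at $c_i$) and petals $v_i\,m_i\,c_i\,c_{i-1}\,m_{i-1}$ labelled $i,i+1,i+2,i+3,i+4$ (mod 5). $K_0$ is one decorated pentagon, $K_n=\omega^n(K_0)$ embeds label-preservingly onto the central superpentagon $\omega^n(\text{central face of }\omega(K_0))$ of $K_{n+1}$, and $K$ is the direct limit. Isomorphisms are cell-preserving label-preserving bijections. A patch is a finite subcomplex that is a union of faces connected through chains of faces sharing edges. $L$ is locally isomorphic to $K$ if every patch of $L$ is isomorphic to a patch of $K$. $\Xi$ is the set of isomorphism classes $[(L,v)]$ with $L$ locally isomorphic to $K$ and $v$ a vertex of $L$; $\omega(L)$ applies $\omega$ to every face of $L$. $B(v,n,L)$ is the subcomplex of faces all of whose vertices are at edge-path distance $\le n$ from $v$. $d'([(L,v)],[(L',v')])=\min(1/n,1)$ with $n$ the greatest radius such that some isomorphism $B(v,n,L)\to B(v',n,L')$ sends $v$ to $v'$ ($d'=0$ if for all $n$). *)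

(* Defs.v *)
From HB Require Import structures.
From mathcomp Require Import all_boot all_order all_algebra.
From mathcomp Require Import boolp classical_sets cardinality reals.
From Stdlib Require Import Relations.Relation_Operators.

Set Implicit Arguments.
Unset Strict Implicit.
Unset Printing Implicit Defensive.
Import Order.TTheory GRing.Theory Num.Theory.
Local Open Scope classical_set_scope.
Local Open Scope ring_scope.

(* A complex has a carrier type of (potential) vertices and a set of    *)
(* faces.  A face is a function t : 'I_5 -> vert: t k is the corner      *)
(* labelled k+1, and the boundary of the face is the cycle              *)
(* t 0, t 1, t 2, t 3, t 4 (indices taken mod 5, i.e. in 'Z_5).          *)
(* The vertices of the complex are the elements occurring in faces;     *)
(* other elements of the carrier are ignored.  Edges are the pairs of   *)
(* cyclically consecutive corners of faces.                             *)
Record cplx := Cplx { vert : Type; face : set ('I_5 -> vert) }.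
Arguments face : clear implicits.

Definition ftype (L : cplx) := 'I_5 -> vert L.

Definition is_vert (L : cplx) (x : vert L) : Prop :=
  exists t : ftype L, exists i, face L t /\ t i = x.

Definition adj (L : cplx) (x y : vert L) : Prop :=
  exists t : ftype L, exists i : 'I_5, face L t /\
    ((t i = x /\ t (i + 1) = y) \/ (t i = y /\ t (i + 1) = x)).

Fixpoint is_path (L : cplx) (x : vert L) (s : seq (vert L)) : Prop :=
  match s with
  | [::] => True
  | y :: s' => adj x y /\ is_path y s'
  end.

Definition within (L : cplx) (v : vert L) (n : nat) (w : vert L) : Prop :=
  exists s, is_path v s /\ (size s <= n)%N /\ last v s = w.

Definition corner (L : cplx) (v : vert L) (c : ftype L * 'I_5) : Prop :=
  face L c.1 /\ c.1 c.2 = v.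

Definition cnbr (L : cplx) (c : ftype L * 'I_5) (w : vert L) : Prop :=
  c.1 (c.2 + 1) = w \/ c.1 (c.2 - 1) = w.

(* the link of v (nodes: neighbours of v, edges: corners at v) is a
   single (finite) cycle *)
Definition link_is_cycle (L : cplx) (v : vert L) : Prop :=
  finite_set (corner v) /\
  (forall w : vert L,
      (forall c, corner v c -> ~ cnbr c w) \/
      exists c1 c2, c1 <> c2 /\
        forall c, (corner v c /\ cnbr c w) <-> (c = c1 \/ c = c2)) /\
  (forall c c', corner v c -> corner v c' ->
     clos_refl_trans _
       (fun a b => corner v a /\ corner v b /\ exists w, cnbr a w /\ cnbr b w)
       c c').

(* elementary edge-path homotopies: backtracking, and inserting the
   boundary loop of a face *)
Definition htpy_step (L : cplx) (p q : seq (vert L)) : Prop :=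
  (exists s1 s2 x y, adj x y /\ p = s1 ++ x :: y :: x :: s2 /\ q = s1 ++ x :: s2)
  \/ (exists s1 s2 (t : ftype L) i, face L t /\
        p = s1 ++ t i :: s2 /\
        q = s1 ++ [:: t i; t (i + 1); t (i + 1 + 1); t (i + 1 + 1 + 1);
                      t (i + 1 + 1 + 1 + 1); t i] ++ s2).

Definition connected_cplx (L : cplx) : Prop :=
  forall x y : vert L, is_vert x -> is_vert y ->
    exists s, is_path x s /\ last x s = y.

Definition simply_connected (L : cplx) : Prop :=
  forall (v : vert L) s, is_vert v -> is_path v s -> last v s = v ->
    clos_refl_sym_trans _ (@htpy_step L) (v :: s) [:: v].

(* combinatorial tiling: a 2-dim (regular) CW complex homeomorphic to the
   open disk: faces are simple pentagons, every vertex has a circle as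
   link (surface without boundary), connected, simply connected, and
   non-compact (infinitely many faces). *)
Definition tiling (L : cplx) : Prop :=
  [/\ forall t : ftype L, face L t -> injective t,
      forall v : vert L, is_vert v -> link_is_cycle v,
      connected_cplx L,
      simply_connected L
    & ~ finite_set (face L)].

Definition pverts (L : cplx) (P : set (ftype L)) : set (vert L) :=
  [set x | exists t i, P t /\ t i = x].

(* f, g are mutually inverse bijections between D1 and D2 that map the
   faces of P1 onto the faces of P2 (label-preserving, since a face is a
   labelled tuple) *)
Definition cx_iso (L1 L2 : cplx) (P1 : set (ftype L1)) (P2 : set (ftype L2))
    (D1 : set (vert L1)) (D2 : set (vert L2))
    (f : vert L1 -> vert L2) (g : vert L2 -> vert L1) : Prop :=
  [/\ forall x, D1 x -> D2 (f x) /\ g (f x) = x,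
      forall y, D2 y -> D1 (g y) /\ f (g y) = y,
      forall t, P1 t -> P2 (f \o t)
    & forall s, P2 s -> P1 (g \o s)].

Definition share_edge (L : cplx) (a b : ftype L) : Prop :=
  exists i j : 'I_5, (a i = b j /\ a (i + 1) = b (j + 1)) \/
                     (a i = b (j + 1) /\ a (i + 1) = b j).

Definition patch (L : cplx) (P : set (ftype L)) : Prop :=
  [/\ P `<=` face L, finite_set P &
      forall t s, P t -> P s ->
        clos_refl_trans _ (fun a b => P a /\ P b /\ share_edge a b) t s].

Definition loc_iso (L M : cplx) : Prop :=
  forall P : set (ftype L), patch P ->
  exists Q : set (ftype M), patch Q /\
    exists f g, cx_iso P Q (pverts P) (pverts Q) f g.

Inductive overt (V : Type) :=
| OV of V                       (* old vertex *)
| OM of set V                   (* midpoint of the edge {u,w} *)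
| OC of ('I_5 -> V) & 'I_5.     (* c'_j of a face: OC t j = c_{j+1} *)

Definition midp (V : Type) (t : 'I_5 -> V) (j : 'I_5) : overt V :=
  OM [set x | x = t j \/ x = t (j + 1)].

(* central pentagon: corner labelled k+1 is c_k (paper) = OC t (k-1) *)
Definition central (V : Type) (t : 'I_5 -> V) : 'I_5 -> overt V :=
  fun k => OC t (k - 1).

(* petal j (paper petal i = j+1):  v_i m_i c_i c_{i-1} m_{i-1}
   with labels i, i+1, ..., i+4 *)
Definition petal (V : Type) (t : 'I_5 -> V) (j : 'I_5) : 'I_5 -> overt V :=
  fun k => match nat_of_ord (k - j) with
           | 0 => OV (t j)
           | 1 => midp t j
           | 2 => OC t j
           | 3 => OC t (j - 1)
           | _ => midp t (j - 1)
           end.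

Definition omega (L : cplx) : cplx :=
  @Cplx (overt (vert L))
    [set s | exists t, face L t /\ (s = central t \/ exists j, s = petal t j)].

Definition omap (V W : Type) (f : V -> W) (x : overt V) : overt W :=
  match x with
  | OV v => OV (f v)
  | OM A => OM (f @` A)
  | OC t j => OC (f \o t) j
  end.

Fixpoint Kn (n : nat) : cplx :=
  match n with
  | 0 => @Cplx 'I_5 [set id]
  | m.+1 => omega (Kn m)
  end.

(* K_n embeds onto the central superpentagon of K_{n+1} *)
Fixpoint emb (n : nat) : vert (Kn n) -> vert (Kn n.+1) :=
  match n return vert (Kn n) -> vert (Kn n.+1) with
  | 0 => fun k : 'I_5 => OC (id : 'I_5 -> 'I_5) (k - 1)
  | m.+1 => omap (@emb m)
  end.

Fixpoint up (n k : nat) : vert (Kn n) -> vert (Kn (Nat.add k n)) :=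
  match k return vert (Kn n) -> vert (Kn (Nat.add k n)) with
  | 0 => id
  | k'.+1 => fun x => emb (up k' x)
  end.

Definition Kpt := {n : nat & vert (Kn n)}.

Definition lim_rel (p q : Kpt) : Prop :=
  exists k l : nat,
    existT (fun n => vert (Kn n)) (Nat.add k (projT1 p)) (up k (projT2 p)) =
    existT (fun n => vert (Kn n)) (Nat.add l (projT1 q)) (up l (projT2 q)).

(* vertices of the direct limit: equivalence classes of lim_rel *)
Definition cls (p : Kpt) : set Kpt := [set q | lim_rel p q].

Definition K : cplx :=
  @Cplx (set Kpt)
    [set t | exists n (s : ftype (Kn n)), face (Kn n) s /\
             t = (fun i => cls (existT (fun n => vert (Kn n)) n (s i)))].

Definition ball (L : cplx) (v : vert L) (n : nat) : set (ftype L) :=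
  [set t | face L t /\ forall i, within v n (t i)].

Definition balls_iso (L L' : cplx) (v : vert L) (v' : vert L') (n : nat) : Prop :=
  exists f g, f v = v' /\ g v' = v /\
    cx_iso (ball v n) (ball v' n)
      (pverts (ball v n) `|` [set v]) (pverts (ball v' n) `|` [set v']) f g.

(* d' = min(1/n, 1) for the greatest such n (= 1 when n = 0), and 0 if
   the balls are isomorphic for all n: realised as an infimum *)
Definition dprime (R : realType) (L L' : cplx) (v : vert L) (v' : vert L') : R :=
  inf [set ((maxn n 1)%:R)^-1 | n in [set n | balls_iso v v' n]].

(* Main.v *)
Require Import Defs.
From mathcomp Require Import all_boot all_order all_algebra.
From mathcomp Require Import boolp classical_sets cardinality reals.
Import Order.TTheory GRing.Theory Num.Theory.
Local Open Scope classical_set_scope.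
Local Open Scope ring_scope.
Set Implicit Arguments.
Unset Strict Implicit.
Unset Printing Implicit Defensive.

Lemma I5_cases (i j : 'I_5) :
  [|| j == i, j == i + 1, j == i + 1 + 1, j == i - 1 | j == i - 1 - 1].
Proof.
case: i => [[|[|[|[|[|?]]]]] Hi] //; case: j => [[|[|[|[|[|?]]]]] Hj] //.
all: try by apply/orP; left; apply/eqP; apply/val_inj.
Qed.


Lemma is_path_cat L (x : vert L) s1 s2 :
  is_path x (s1 ++ s2) <-> is_path x s1 /\ is_path (last x s1) s2.
Proof.
elim: s1 x => [|y s1 IH] x /=; first by split => // [[]].
rewrite IH; tauto.
Qed.

Lemma within_trans L (v x y : vert L) a b :
  within v a x -> within x b y -> within v (a + b)%N y.
Proof.
move=> [s1 [p1 [h1 l1]]] [s2 [p2 [h2 l2]]]; exists (s1 ++ s2); split.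
  by apply/is_path_cat; rewrite l1.
split; first by rewrite size_cat leq_add.
by rewrite last_cat l1.
Qed.

Lemma within_mono L (v x : vert L) a b :
  within v a x -> (a <= b)%N -> within v b x.
Proof.
move=> [s [p [h l]]] ab; exists s; split=> //; split=> //; exact: leq_trans ab.
Qed.

Lemma adj_within L (x y : vert L) : adj x y -> within x 1%N y.
Proof. by move=> H; exists [:: y]. Qed.

Lemma face_corners L (T : ftype L) i j : face L T -> within (T i) 2%N (T j).
Proof.
move=> fT.
have A : forall k : 'I_5, adj (T k) (T (k + 1)).
  by move=> k; exists T, k; split=> //; left.
have B : forall k : 'I_5, adj (T k) (T (k - 1)).
  by move=> k; exists T, (k - 1); split=> //; right; rewrite subrK.
have := I5_cases i j.
case/orP=> [/eqP->|/orP[/eqP->|/orP[/eqP->|/orP[/eqP->|/eqP->]]]].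
- by exists [::].
- exact: within_mono (adj_within (A i)) _.
- exact: within_trans (adj_within (A i)) (adj_within (A _)).
- exact: within_mono (adj_within (B i)) _.
- exact: within_trans (adj_within (B i)) (adj_within (B _)).
Qed.

Definition inF (V : Type) (T : 'I_5 -> V) (x : overt V) :=
  exists k, central T k = x \/ exists j, petal T j k = x.

Definition Inv L (v : vert L) (d : nat) (x : overt (vert L)) :=
  forall T : ftype L, face L T -> inF T x -> forall i, within v d (T i).

Lemma inF_cases V (T : 'I_5 -> V) x : inF T x ->
  (exists j, x = OV (T j)) \/ (exists j, x = midp T j) \/ (exists j, x = OC T j).
Proof.
move=> [k [<-|[j <-]]]; first by right; right; exists (k - 1).
rewrite /petal; case: (nat_of_ord (k - j)) => [|[|[|[|?]]]]; eauto.
Qed.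

Lemma inF_share V (T T' : 'I_5 -> V) x : inF T x -> inF T' x ->
  exists a b, T a = T' b.
Proof.
move=> /inF_cases [[j ->]|[[j ->]|[j ->]]] /inF_cases [[j' E]|[[j' E]|[j' E]]];
  rewrite /midp in E; try discriminate.
- by case: E => E; exists j, j'.
- case: E => E.
  have : [set y | y = T' j' \/ y = T' (j' + 1)]%classic (T j) by rewrite -E; left.
  by case=> E'; [exists j, j' | exists j, (j' + 1)].
- by case: E => -> _; exists 0, 0.
Qed.

Lemma inF_face V (T : 'I_5 -> V) S :
  (S = central T \/ exists j, S = petal T j) -> forall k, inF T (S k).
Proof. by case=> [->|[j ->]] k; exists k; [left|right; exists j]. Qed.

Lemma adj_omega L (x y : overt (vert L)) : @adj (omega L) x y ->
  exists T, face L T /\ inF T x /\ inF T y.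
Proof.
move=> [S [i [[T [fT HS]] Hxy]]]; exists T; split=> //.
by case: Hxy => [[<- <-]|[<- <-]]; split; apply: inF_face.
Qed.

Lemma Inv_step L (v : vert L) d x y : @adj (omega L) x y -> Inv v d x ->
  Inv v (d + 2)%N y.
Proof.
move=> /adj_omega [T [fT [Tx Ty]]] Ix T' fT' T'y i.
have [a [b E]] := inF_share Ty T'y.
by apply: within_trans (face_corners b i fT'); rewrite -E; apply: Ix.
Qed.

Lemma Inv_path L (v : vert L) p : forall x0 d, @is_path (omega L) x0 p ->
  Inv v d x0 -> Inv v (d + 2 * size p)%N (last x0 p).
Proof.
elim: p => [|y p IH] x0 d /=; first by rewrite muln0 addn0.
move=> [axy pp] Ix.
have := IH y (d + 2)%N pp (Inv_step axy Ix).
by rewrite mulnS addnA [(d + 2)%N]addnC.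
Qed.

Lemma Inv_base L (v : vert L) : Inv v 2%N (OV v).
Proof.
move=> T fT /inF_cases [[j [->]]|[[j E]|[j E]]].
- by move=> i; apply: face_corners.
- by rewrite /midp in E.
- by [].
Qed.

Lemma image_pair (V W : Type) (f : V -> W) (a b : V) :
  f @` [set x | x = a \/ x = b]%classic = [set y | y = f a \/ y = f b]%classic.
Proof.
apply/seteqP; split=> y /=.
- by case=> x [->|->] <-; [left|right].
- by case=> ->; [exists a; first left | exists b; first right].
Qed.

Lemma omap_petal (V W : Type) (f : V -> W) T j k :
  Defs.omap f (petal T j k) = petal (f \o T) j k.
Proof.
rewrite /petal; case: (nat_of_ord (k - j)) => [|[|[|[|?]]]] //=;
  by rewrite /midp /= image_pair.
Qed.

Lemma omap_central (V W : Type) (f : V -> W) T k :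
  Defs.omap f (central T k) = central (f \o T) k.
Proof. by []. Qed.

Lemma omap_face (V W : Type) (f : V -> W) T S :
  (S = central T \/ exists j, S = petal T j) ->
  (Defs.omap f \o S = central (f \o T) \/ exists j, Defs.omap f \o S = petal (f \o T) j).
Proof.
case=> [->|[j ->]]; [left|right; exists j]; apply: funext => k /=.
  by [].
exact: omap_petal.
Qed.

Lemma cx_iso_swap L1 L2 (P1 : set (ftype L1)) (P2 : set (ftype L2)) D1 D2 f g :
  cx_iso P1 P2 D1 D2 f g -> cx_iso P2 P1 D2 D1 g f.
Proof. by case=> *; split. Qed.

Section Main.
Variables (L L' : cplx) (v : vert L) (v' : vert L') (n : nat).
Variables (f : vert L -> vert L') (g : vert L' -> vert L).
Variables (D1 : set (vert L)) (D2 : set (vert L')).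
Hypothesis H : cx_iso (ball v n) (ball v' n) D1 D2 f g.
Hypothesis fv : f v = v'.
Hypothesis HD1 : (pverts (ball v n) `<=` D1)%classic.

Lemma ball_of_Inv d T : face L T -> (forall i, within v d (T i)) ->
  (d <= n)%N -> ball v n T.
Proof. by move=> fT Hw dn; split=> // i; apply: within_mono (Hw i) dn. Qed.

Lemma path_map p : forall x0 d, @is_path (omega L) x0 p -> Inv v d x0 ->
  (d + 2 * size p <= n)%N ->
  @is_path (omega L') (Defs.omap f x0) (map (Defs.omap f) p).
Proof.
case: H => _ _ H3 _.
elim: p => [|y p IH] x0 d //= [axy pp] Ix hd.
split; last first.
  apply: IH (Inv_step axy Ix) _ => //.
  by move: hd; rewrite mulnS addnA [(d + 2)%N]addnC.
case: axy => S [i [[T [fT HS]] Hxy]].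
have BT : ball v n T.
  apply: (@ball_of_Inv d) => //; last first.
    by apply: leq_trans hd; apply: leq_addr.
  apply: Ix => //.
  by case: Hxy => [[<- _]|[_ <-]]; apply: inF_face.
have [fT' _] := H3 _ BT.
exists (Defs.omap f \o S), i; split.
  by exists (f \o T); split => //; apply: omap_face.
by case: Hxy => [[<- <-]|[<- <-]]; [left|right].
Qed.

Lemma ball_map m (Hm : (2 * m + 2 <= n)%N) s :
  ball (OV v : vert (omega L)) m s ->
  ball (OV v' : vert (omega L')) m (Defs.omap f \o s) /\
  forall i, Defs.omap g (Defs.omap f (s i)) = s i.
Proof.
case: (H) => H1 _ H3 _.
move=> [[T [fT HS]] Hw].
have BT : ball v n T.
  have [p [pp [sz ls]]] := Hw 0.
  have := Inv_path pp (@Inv_base L v).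
  rewrite ls => /(_ T fT (inF_face HS 0)) Hc.
  apply: (@ball_of_Inv (2 + 2 * size p)) => //.
  apply: leq_trans Hm; rewrite addnC leq_add2r leq_mul2l /=; exact: sz.
have [fT' _] := H3 _ BT.
split; first split.
- by exists (f \o T); split => //; apply: omap_face.
- move=> i; have [p [pp [sz ls]]] := Hw i.
  exists (map (Defs.omap f) p); split; last split.
  + have := @path_map p (OV v) 2%N pp (@Inv_base L v).
    rewrite /= fv; apply; apply: leq_trans Hm.
    by rewrite addnC leq_add2r leq_mul2l /=.
  + by rewrite size_map.
  + by rewrite -fv /= (last_map (Defs.omap f) p (OV v)) ls.
- have E : g \o (f \o T) = T.
    apply: funext => k /=.
    have Dk : D1 (T k) by apply: HD1; exists T, k.
    by have [_ ->] := H1 _ Dk.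
  move=> i; case: HS => [->|[j ->]].
  + by rewrite !omap_central E.
  + by rewrite !omap_petal E.
Qed.

End Main.

Lemma omega_iso L L' (v : vert L) (v' : vert L') n m :
  (2 * m + 2 <= n)%N -> balls_iso v v' n ->
  balls_iso (OV v : vert (omega L)) (OV v' : vert (omega L')) m.
Proof.
move=> Hm [f [g [fv [gv H]]]].
have H' := cx_iso_swap H.
have HD1 : (pverts (ball v n) `<=` pverts (ball v n) `|` [set v])%classic.
  by move=> x Hx; left.
have HD2 : (pverts (ball v' n) `<=` pverts (ball v' n) `|` [set v'])%classic.
  by move=> x Hx; left.
exists (Defs.omap f), (Defs.omap g); split; first by rewrite /= fv.
split; first by rewrite /= gv.
split.
- move=> x [[s [i [Bs <-]]]|->].
    have [B' E] := ball_map H fv HD1 Hm Bs.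
    by split; [left; exists (Defs.omap f \o s), i|].
  by split; [right; rewrite /= fv|rewrite /= fv gv].
- move=> x [[s [i [Bs <-]]]|->].
    have [B' E] := ball_map H' gv HD2 Hm Bs.
    by split; [left; exists (Defs.omap g \o s), i|].
  by split; [right; rewrite /= gv|rewrite /= gv fv].
- by move=> s Bs; have [] := ball_map H fv HD1 Hm Bs.
- by move=> s Bs; have [] := ball_map H' gv HD2 Hm Bs.
Qed.

Lemma within0 L (v x : vert L) : within v 0 x -> x = v.
Proof. by move=> [[|? ?] [_ [//= _ <-]]]. Qed.

Lemma balls_iso0 L L' (v : vert L) (v' : vert L') :
  (forall t : ftype L, face L t -> injective t) ->
  (forall t : ftype L', face L' t -> injective t) -> balls_iso v v' 0.
Proof.
move=> inj inj'.
have E0 : forall M (w : vert M), (forall t : ftype M, face M t -> injective t) ->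
    forall t, ~ ball w 0 t.
  move=> M w injM t [ft Hw].
  have := injM _ ft 0 1; rewrite (within0 (Hw 0)) (within0 (Hw 1)).
  by move=> /(_ erefl).
exists (fun _ => v'), (fun _ => v); split=> //; split=> //; split.
- move=> x [[t [i [Bt _]]]|->]; first by case: (E0 _ _ inj t Bt).
  by split=> //; right.
- move=> x [[t [i [Bt _]]]|->]; first by case: (E0 _ _ inj' t Bt).
  by split=> //; right.
- by move=> t Bt; case: (E0 _ _ inj t Bt).
- by move=> t Bt; case: (E0 _ _ inj' t Bt).
Qed.

Unset Implicit Arguments.

Theorem theoreml (R : realType) (L : cplx) (v : vert L) :
  tiling L -> loc_iso L K -> is_vert v ->
  forall eps : R, 0 < eps -> exists2 delta : R, 0 < delta &
    forall (L' : cplx) (v' : vert L'),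
      tiling L' -> loc_iso L' K -> is_vert v' ->
      dprime R v v' < delta ->
      dprime R (OV v : vert (omega L)) (OV v' : vert (omega L')) < eps.
Proof.
move=> [injL _ _ _ _] _ _ eps eps0.
set m := (Num.Def.archi_bound (eps^-1)).+1.
have m0 : (0 < m)%N by [].
have meps : (m%:R : R)^-1 < eps.
  rewrite -[eps]invrK ltf_pV2 ?posrE ?invr_gt0 ?ltr0n //.
  apply: lt_le_trans (archi_boundP _) _; first by rewrite invr_ge0 ltW.
  by rewrite ler_nat.
exists (((2 * m + 2)%N%:R : R)^-1); first by rewrite invr_gt0 ltr0n addn2.
move=> L' v' [injL' _ _ _ _] _ _ Hd.
have [y [k Bk <-] yd] := inf_lt (ex_intro _ _ (ex_intro2 _ _ 0%N (balls_iso0 v v' injL injL') erefl)) Hd.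
have km : (2 * m + 2 <= k)%N.
  move: yd; rewrite ltf_pV2 ?posrE ?ltr0n ?addn2 ?leq_maxr ?orbT // ltr_nat.
  rewrite leq_max => /orP [h|h]; first exact: ltnW.
  by move: h; rewrite ?addn2.
have Bm := omega_iso km Bk.
apply: le_lt_trans meps.
have -> : (m%:R : R)^-1 = ((maxn m 1)%:R)^-1 by rewrite (maxn_idPl m0).
apply: ge_inf; last by exists m.
by exists 0 => z [j _ <-]; rewrite invr_ge0 ler0n.
Qed.
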